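(* For any real $R\ge 1$, there exists an $R$-competitive incremental algorithm for frequency allocation in bipartite graphs if and only if there exists an $R$-competitive F-system.
   Context: Frequency allocation: a (possibly infinite) undirected graph $G$ is given. Requests arrive one at a time, each at some vertex. An incremental algorithm must, on arrival of each request, immediately and irrevocably assign it a frequency (a positive integer). After every step, for the current loads $\ell_v$ (number of requests that have arrived at vertex $v$), letting $L_v$ be the set of frequencies assigned to requests at $v$: all $\ell_v$ requests at $v$ have distinct frequencies (so $|L_v|=\ell_v$), and $L_v\cap L_w=\emptyset$ for every edge $(v,w)$. The cost is the number of distinct frequencies used, $|\bigcup_v L_v|$. ${\textit{opt}}(G,\bar\ell)$ denotes the minimum of $|\bigcup_v L_v|$ over all assignments of sets $L_v$ of positive integers with $|L_v|=\ell_v$ and $L_v\cap L_w=\emptyset$ for every edge $(v,w)$. An incremental algorithm is $R$-competitive for bipartite graphs if there is a constant $\lambda$ such that for every bipartite graph $G$ and every request sequence, the number of frequencies used is at most $R\cdot{\textit{opt}}(G,\bar\ell)+\lambda$, where $\bar\ell$ is the load vector of the sequence. F-system: a family $\mathcal F=\{F^c_{t,k}\}$ of sets of positive integers, indexed by $c\in\{A,B\}$ and integers $0<k\le t$, such that (F1) $|F^c_{t,k}|\ge k$ for all $c,t,k$; and (F2) $F^A_{t,k}\cap F^B_{t',k'}=\emptyset$ for all $k\le t$, $k'\le t'$ with $k+k'\le\max(t,t')$. An F-system is $R$-competitive if there is a constant $\lambda$ (independent of $t$) such that for every positive integer $t$, $\left|\bigcup_{c\in\{A,B\}}\bigcup_{0<\kappa\le\tau\le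 t}F^c_{\tau,\kappa}\right|\le Rt+\lambda$. *)

(* Defs.v *)
From Stdlib Require Import Reals List Arith.
Import ListNotations.
Open Scope R_scope.

(* A (possibly infinite) undirected graph: a vertex type with a symmetric
   adjacency relation. *)
Definition symmetric_rel {V : Type} (adj : V -> V -> Prop) : Prop :=
  forall v w, adj v w -> adj w v.

Definition bipartite {V : Type} (adj : V -> V -> Prop) : Prop :=
  exists col : V -> bool, forall v w, adj v w -> col v <> col w.

(* occ v s n : vertex v occurs exactly n times in the request sequence s,
   i.e. the load of v is n. *)
Inductive occ {V : Type} (v : V) : list V -> nat -> Prop :=
| occ_nil : occ v [] 0
| occ_hit : forall l n, occ v l n -> occ v (v :: l) (S n)
| occ_miss : forall w l n, w <> v -> occ v l n -> occ v (w :: l) n.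

(* Sets L_v (given as duplicate-free lists) of positive integers with
   |L_v| = load of v, disjoint across edges, whose union has exactly k
   elements. *)
Definition feasible {V : Type} (adj : V -> V -> Prop) (s : list V) (k : nat)
  : Prop :=
  exists L : V -> list nat,
    (forall v, NoDup (L v)) /\
    (forall v n, occ v s n -> length (L v) = n) /\
    (forall v x, In x (L v) -> (0 < x)%nat) /\
    (forall v w x, adj v w -> In x (L v) -> In x (L w) -> False) /\
    (exists U : list nat, NoDup U /\ length U = k /\
        forall x, (exists v, In x (L v)) <-> In x U).

Definition is_opt {V : Type} (adj : V -> V -> Prop) (s : list V) (k : nat)
  : Prop :=
  feasible adj s k /\ forall k', feasible adj s k' -> (k <= k')%nat.

(* A (deterministic) incremental algorithm knows the graph G and, on arrival
   of a request, sees the sequence of request vertices so far (the last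
   element being the new request) and returns the frequency of the new
   request.  Earlier assignments are irrevocable since they are determined
   by the prefixes. *)
Definition algorithm : Type :=
  forall (V : Type), (V -> V -> Prop) -> list V -> nat.

(* frequency assigned to the i-th request (0-based) of s *)
Definition freq (alg : algorithm) {V : Type} (adj : V -> V -> Prop)
  (s : list V) (i : nat) : nat :=
  alg V adj (firstn (S i) s).

(* validity after every step (checking all sequences covers all prefixes) *)
Definition valid_run (alg : algorithm) {V : Type} (adj : V -> V -> Prop)
  (s : list V) : Prop :=
  (forall i, (i < length s)%nat -> (0 < freq alg adj s i)%nat) /\
  (forall i j v w, i <> j -> nth_error s i = Some v -> nth_error s j = Some w ->
     v = w -> freq alg adj s i <> freq alg adj s j) /\
  (forall i j v w, nth_error s i = Some v -> nth_error s j = Some w ->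
     adj v w -> freq alg adj s i <> freq alg adj s j).

Definition cost (alg : algorithm) {V : Type} (adj : V -> V -> Prop)
  (s : list V) : nat :=
  length (nodup Nat.eq_dec (map (freq alg adj s) (seq 0 (length s)))).

Definition valid_on_bipartite (alg : algorithm) : Prop :=
  forall (V : Type) (adj : V -> V -> Prop),
    symmetric_rel adj -> bipartite adj -> forall s : list V, valid_run alg adj s.

Definition alg_competitive (R : R) (alg : algorithm) : Prop :=
  exists lam : Rdefinitions.R,
    forall (V : Type) (adj : V -> V -> Prop),
      symmetric_rel adj -> bipartite adj ->
      forall (s : list V) (k : nat), is_opt adj s k ->
        INR (cost alg adj s) <= R * INR k + lam.

Inductive side := SA | SB.

(* F c t k : the set F^c_{t,k} (as a predicate on nat); only indices with
   0 < k <= t are meaningful. *)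
Definition fsys_family : Type := side -> nat -> nat -> nat -> Prop.

Definition is_fsystem (F : fsys_family) : Prop :=
  (forall c t k x, (0 < k <= t)%nat -> F c t k x -> (0 < x)%nat) /\
  (forall c t k, (0 < k <= t)%nat ->
     exists l : list nat, NoDup l /\ (k <= length l)%nat /\ Forall (F c t k) l) /\
  (forall t k t' k' x, (0 < k <= t)%nat -> (0 < k' <= t')%nat ->
     (k + k' <= Nat.max t t')%nat -> F SA t k x -> F SB t' k' x -> False).

Definition fsys_union (F : fsys_family) (t x : nat) : Prop :=
  exists c tau kappa, (0 < kappa <= tau)%nat /\ (tau <= t)%nat /\ F c tau kappa x.

Definition fsys_competitive (R : R) (F : fsys_family) : Prop :=
  exists lam : Rdefinitions.R,
    forall t : nat, (0 < t)%nat ->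
      forall l : list nat, NoDup l -> Forall (fsys_union F t) l ->
        INR (length l) <= R * INR t + lam.

(* Main.v *)
Require Import Defs.
From Stdlib Require Import Reals List Arith Lia Lra ClassicalEpsilon Classical Wf_nat.
Import ListNotations.
Open Scope R_scope.

Local Open Scope nat_scope.

Definition decV (V : Type) : forall x y : V, {x = y} + {x <> y} :=
  fun x y => excluded_middle_informative (x = y).

Lemma occ_count {V} (d : forall x y : V, {x = y} + {x <> y}) (v : V) s :
  occ v s (count_occ d s v).
Proof.
  induction s as [|a s IH]; simpl. constructor.
  destruct (d a v) as [e|n]. subst. now constructor. now constructor.
Qed.

Lemma occ_unique {V} (v : V) s n m : occ v s n -> occ v s m -> n = m.
Proof.
  intros H; revert m; induction H; intros m Hm; inversion Hm; subst; auto;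
  try congruence.
Qed.

Lemma occ_iff {V} (d : forall x y : V, {x = y} + {x <> y}) v s n :
  occ v s n -> n = count_occ d s v.
Proof. intros H; eapply occ_unique; [exact H| apply occ_count]. Qed.

Definition cnt {V} (x : V) (p : list V) : nat := count_occ (decV V) p x.

Lemma feas_len {V} adj (s : list V) K v :
  feasible adj s K -> exists L : V -> list nat, NoDup (L v) /\ length (L v) = cnt v s /\
   (forall w, NoDup (L w) /\ length (L w) = cnt w s) /\
   (forall w x, adj v w -> In x (L v) -> In x (L w) -> False) /\
   exists U, NoDup U /\ length U = K /\ forall w x, In x (L w) -> In x U.
Proof.
  intros (L & Hnd & Hlen & _ & Hdis & U & HU & HUl & HUi).
  exists L. repeat split; auto.
  - apply Hlen. apply occ_count.
  - apply Hlen. apply occ_count.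
  - intros; eapply Hdis; eauto.
  - exists U; repeat split; auto. intros w x Hx. apply HUi. eauto.
Qed.

Lemma feas_one {V} adj (s : list V) K v : feasible adj s K -> cnt v s <= K.
Proof.
  intros H. destruct (feas_len adj s K v H) as (L & Hn & Hl & _ & _ & U & HU & HUl & HUi).
  rewrite <- Hl, <- HUl. apply NoDup_incl_length; auto. intros x; apply HUi.
Qed.

Lemma feas_pair {V} adj (s : list V) K v w : feasible adj s K -> adj v w ->
  cnt v s + cnt w s <= K.
Proof.
  intros H Hadj. destruct (feas_len adj s K v H) as (L & Hn & Hl & Hall & Hdis & U & HU & HUl & HUi).
  destruct (Hall w) as [Hnw Hlw].
  rewrite <- Hl, <- Hlw, <- HUl, <- length_app. apply NoDup_incl_length.
  - apply NoDup_app; auto. intros x H1 H2. eapply Hdis; eauto.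
  - intros x Hx. apply in_app_or in Hx. destruct Hx; eapply HUi; eauto.
Qed.

Lemma NoDup_map_on {A B} (f : A -> B) l : NoDup l ->
  (forall x y, In x l -> In y l -> f x = f y -> x = y) -> NoDup (map f l).
Proof.
  induction 1 as [|a l Ha Hl IH]; intros Hi; simpl; constructor.
  - intros Hin. apply in_map_iff in Hin. destruct Hin as (y & Hy & Hyl).
    assert (y = a) by (apply Hi; simpl; auto). subst. contradiction.
  - apply IH. intros; apply Hi; simpl; auto.
Qed.

Lemma fr_max_init d l : d <= fold_right Nat.max d l.
Proof. induction l; simpl; lia. Qed.
Lemma fr_max_in a d l : In a l -> a <= fold_right Nat.max d l.
Proof. induction l; simpl; intros H; [contradiction|destruct H as [H|H]]; subst; try lia. specialize (IHl H); lia. Qed.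
Lemma fr_max_le d l B : d <= B -> (forall a, In a l -> a <= B) -> fold_right Nat.max d l <= B.
Proof. induction l; simpl; intros; auto. apply Nat.max_lub; auto. Qed.

Lemma freq_prefix (alg : algorithm) {V} adj (p q : list V) i : i < length p ->
  freq alg adj (p ++ q) i = freq alg adj p i.
Proof.
  intros H. unfold freq. rewrite firstn_app.
  replace (S i - length p) with 0 by lia. simpl. now rewrite app_nil_r.
Qed.

Definition dec (P : Prop) : bool := if excluded_middle_informative P then true else false.
Lemma decP (P : Prop) : dec P = true <-> P.
Proof. unfold dec; destruct (excluded_middle_informative P); split; intros; auto; try discriminate; contradiction. Qed.

Definition tloc {V} (adj : V -> V -> Prop) (x : V) (p : list V) : nat :=
  fold_right Nat.max (S (cnt x p))
    (map (fun w => if dec (adj x w) then S (cnt x p) + cnt w p else 0) p).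

Definition colr {V} (adj : V -> V -> Prop) : V -> bool :=
  epsilon (inhabits (fun _ : V => true)) (fun col => forall v w, adj v w -> col v <> col w).

Lemma colr_spec {V} (adj : V -> V -> Prop) : bipartite adj ->
  forall v w, adj v w -> colr adj v <> colr adj w.
Proof. intros H. unfold colr. apply epsilon_spec. exact H. Qed.

Definition sd (b : bool) : side := if b then SA else SB.

Fixpoint prevs {V} (x : V) (p : list V) (fr : list nat) : list nat :=
  match p, fr with
  | a :: p', f :: fr' => if decV V a x then f :: prevs x p' fr' else prevs x p' fr'
  | _, _ => []
  end.

Lemma prevs_len {V} (x : V) p fr : length (prevs x p fr) <= cnt x p.
Proof.
  revert fr; induction p as [|a p IH]; intros [|f fr]; try (simpl; lia).
  unfold cnt; simpl. specialize (IH fr); unfold cnt in IH.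
  destruct (decV V a x); simpl; lia.
Qed.

Lemma prevs_in {V} (x : V) p r fr1 f fr2 : length p = length fr1 ->
  In f (prevs x (p ++ x :: r) (fr1 ++ f :: fr2)).
Proof.
  revert fr1; induction p as [|a p IH]; intros [|g fr1] Hl; simpl in *; try lia.
  - destruct (decV V x x); [left; auto | congruence].
  - destruct (decV V a x); [right|]; apply IH; lia.
Qed.

Definition pick (F : fsys_family) {V} (adj : V -> V -> Prop) (x : V) (p : list V)
  (fr : list nat) : nat :=
  epsilon (inhabits 0) (fun y => F (sd (colr adj x)) (tloc adj x p) (S (cnt x p)) y
                                 /\ ~ In y (prevs x p fr)).

Fixpoint go (F : fsys_family) {V} (adj : V -> V -> Prop) (rl : list V) : list nat :=
  match rl with
  | [] => []
  | x :: rl' => go F adj rl' ++ [pick F adj x (rev rl') (go F adj rl')]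
  end.

Definition run (F : fsys_family) {V} (adj : V -> V -> Prop) (p : list V) := go F adj (rev p).

Lemma run_snoc F {V} adj (p : list V) x :
  run F adj (p ++ [x]) = run F adj p ++ [pick F adj x p (run F adj p)].
Proof. unfold run. rewrite rev_app_distr. simpl. now rewrite rev_involutive. Qed.

Lemma run_app F {V} adj (p q : list V) : exists r, run F adj (p ++ q) = run F adj p ++ r.
Proof.
  induction q as [|x q IH] using rev_ind.
  - exists []. now rewrite !app_nil_r.
  - destruct IH as [r Hr]. rewrite app_assoc, run_snoc, Hr.
    eexists. now rewrite <- app_assoc.
Qed.

Lemma run_len F {V} adj (p : list V) : length (run F adj p) = length p.
Proof.
  induction p as [|x p IH] using rev_ind. reflexivity.
  rewrite run_snoc, !length_app, IH. reflexivity.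
Qed.

Definition algF (F : fsys_family) : algorithm := fun V adj p => last (run F adj p) 0.

Lemma freq_split F {V} adj (p q : list V) v :
  freq (algF F) adj (p ++ v :: q) (length p) = pick F adj v p (run F adj p).
Proof.
  unfold freq, algF. replace (S (length p)) with (length p + 1) by lia.
  rewrite firstn_app_2. simpl. rewrite run_snoc. apply last_last.
Qed.

Lemma tloc_ge {V} adj (x : V) p : S (cnt x p) <= tloc adj x p.
Proof. apply fr_max_init. Qed.

Lemma tloc_nb {V} adj (x w : V) p : In w p -> adj x w -> S (cnt x p) + cnt w p <= tloc adj x p.
Proof.
  intros Hi Ha. unfold tloc. apply fr_max_in. apply in_map_iff. exists w. split; auto.
  destruct (dec (adj x w)) eqn:E; auto. exfalso.
  assert (dec (adj x w) = true) by (apply decP; auto). congruence.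
Qed.

Lemma pick_spec F {V} adj (x : V) p fr : is_fsystem F ->
  F (sd (colr adj x)) (tloc adj x p) (S (cnt x p)) (pick F adj x p fr) /\
  ~ In (pick F adj x p fr) (prevs x p fr).
Proof.
  intros (_ & HF1 & _). unfold pick. apply epsilon_spec.
  destruct (HF1 (sd (colr adj x)) (tloc adj x p) (S (cnt x p))) as (l & Hnd & Hl & Hf).
  { pose proof (tloc_ge adj x p). lia. }
  apply NNPP. intros Hno.
  assert (incl l (prevs x p fr)).
  { intros y Hy. apply NNPP. intros Hn. apply Hno. exists y. split; auto.
    rewrite Forall_forall in Hf; auto. }
  pose proof (NoDup_incl_length Hnd H). pose proof (prevs_len x p fr). lia.
Qed.

Lemma cnt_app {V} (x : V) p q : cnt x (p ++ q) = cnt x p + cnt x q.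
Proof. unfold cnt. apply count_occ_app. Qed.
Lemma cnt_cons_eq {V} (x : V) q : cnt x (x :: q) = S (cnt x q).
Proof. unfold cnt; simpl. destruct (decV V x x); congruence. Qed.
Lemma cnt_cons_le {V} (x a : V) q : cnt x q <= cnt x (a :: q).
Proof. unfold cnt; simpl. destruct (decV V a x); lia. Qed.

Lemma in_split_cnt {V} (x : V) p : In x p -> 1 <= cnt x p.
Proof. intros H. unfold cnt. apply (count_occ_In (decV V)) in H. lia. Qed.

Section Dir2.
Variable F : fsys_family.
Hypothesis HF : is_fsystem F.
Variable V : Type.
Variable adj : V -> V -> Prop.
Hypothesis Hsym : symmetric_rel adj.
Hypothesis Hbip : bipartite adj.

Lemma valid_pair (p r q : list V) v w : (v = w \/ adj w v) ->
  freq (algF F) adj (p ++ v :: r ++ w :: q) (length p) <>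
  freq (algF F) adj (p ++ v :: r ++ w :: q) (length (p ++ v :: r)).
Proof.
  intros Hvw.
  rewrite freq_split.
  replace (p ++ v :: r ++ w :: q) with ((p ++ v :: r) ++ w :: q)
    by (rewrite <- app_assoc; reflexivity).
  rewrite freq_split.
  set (p' := p ++ v :: r).
  destruct (run_app F adj (p ++ [v]) r) as [r' Hr'].
  assert (Hp' : run F adj p' = run F adj p ++ pick F adj v p (run F adj p) :: r').
  { unfold p'. replace (p ++ v :: r) with ((p ++ [v]) ++ r) by (rewrite <- app_assoc; reflexivity).
    rewrite Hr', run_snoc, <- app_assoc. reflexivity. }
  destruct (pick_spec F adj w p' (run F adj p') HF) as [Hg1 Hg2].
  destruct (pick_spec F adj v p (run F adj p) HF) as [Hf1 _].
  intros Heq. destruct Hvw as [<- | Ha].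
  - apply Hg2. rewrite <- Heq, Hp'. unfold p'. apply prevs_in. symmetry. apply run_len.
  - rewrite <- Heq in Hg1.
    pose proof (colr_spec adj Hbip w v Ha) as Hc.
    assert (Hin : In v p') by (unfold p'; apply in_or_app; simpl; auto).
    pose proof (tloc_nb adj w v p' Hin Ha) as Ht.
    assert (Hcv : S (cnt v p) <= cnt v p').
    { unfold p'. rewrite cnt_app, cnt_cons_eq. lia. }
    pose proof (tloc_ge adj v p). pose proof (tloc_ge adj w p').
    destruct HF as (_ & _ & HF2).
    destruct (colr adj w), (colr adj v); simpl in *; try congruence.
    + eapply (HF2 (tloc adj w p') (S (cnt w p')) (tloc adj v p) (S (cnt v p))); eauto; lia.
    + eapply (HF2 (tloc adj v p) (S (cnt v p)) (tloc adj w p') (S (cnt w p'))); eauto; lia.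
Qed.

Lemma valid_lt s i j v w : i < j -> nth_error s i = Some v -> nth_error s j = Some w ->
  (v = w \/ adj w v) -> freq (algF F) adj s i <> freq (algF F) adj s j.
Proof.
  intros Hij Hi Hj Hvw.
  destruct (nth_error_split s j Hj) as (p' & q & -> & <-).
  rewrite nth_error_app1 in Hi by lia.
  destruct (nth_error_split p' i Hi) as (p & r & -> & <-).
  rewrite <- app_assoc. simpl. apply valid_pair; auto.
Qed.

Lemma algF_valid s : valid_run (algF F) adj s.
Proof.
  split; [|split].
  - intros i Hi. destruct (nth_error s i) as [v|] eqn:E.
    2:{ apply nth_error_Some in Hi. congruence. }
    destruct (nth_error_split s i E) as (p & q & -> & <-).
    rewrite freq_split. destruct (pick_spec F adj v p (run F adj p) HF) as [Hf _].
    destruct HF as (HF0 & _). eapply HF0; [|exact Hf].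
    pose proof (tloc_ge adj v p). lia.
  - intros i j v w Hne Hi Hj Hvw. assert (i < j \/ j < i) as [H|H] by lia.
    + eapply valid_lt; eauto.
    + intros E. symmetry in E. revert E. eapply valid_lt; eauto.
  - intros i j v w Hi Hj Ha. destruct (Nat.lt_total i j) as [H|[H|H]].
    + eapply valid_lt; eauto.
    + subst. rewrite Hi in Hj. injection Hj as ->.
      exfalso. exact (colr_spec adj Hbip w w Ha eq_refl).
    + intros E. symmetry in E. revert E. eapply valid_lt; eauto.
Qed.

Lemma algF_union s K i : is_opt adj s K -> i < length s ->
  fsys_union F K (freq (algF F) adj s i).
Proof.
  intros [Hf _] Hi. destruct (nth_error s i) as [v|] eqn:E.
  2:{ apply nth_error_Some in Hi. congruence. }
  destruct (nth_error_split s i E) as (p & q & -> & <-).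
  rewrite freq_split. destruct (pick_spec F adj v p (run F adj p) HF) as [Hp _].
  exists (sd (colr adj v)), (tloc adj v p), (S (cnt v p)).
  pose proof (tloc_ge adj v p).
  assert (Hvs : S (cnt v p) <= cnt v (p ++ v :: q)) by (rewrite cnt_app, cnt_cons_eq; lia).
  pose proof (feas_one adj _ K v Hf).
  repeat split; auto; try lia.
  apply fr_max_le; [lia|]. intros a Ha. apply in_map_iff in Ha.
  destruct Ha as (w & <- & Hw).
  destruct (dec (adj v w)) eqn:Ed; [|lia].
  apply (proj1 (decP _)) in Ed. pose proof (feas_pair adj _ K v w Hf Ed).
  assert (cnt w p <= cnt w (p ++ v :: q)) by (rewrite cnt_app; lia). lia.
Qed.

End Dir2.

Lemma dir2 (R : R) (HR : (1 <= R)%R) :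
  (exists F : fsys_family, is_fsystem F /\ fsys_competitive R F) ->
  (exists alg : algorithm, valid_on_bipartite alg /\ alg_competitive R alg).
Proof.
  intros (F & HF & lam & Hlam). exists (algF F). split.
  - intros V adj Hs Hb s. apply algF_valid; auto.
  - exists (Rabs lam). intros V adj Hs Hb s K HK.
    assert (HRK : (0 <= R * INR K)%R) by (apply Rmult_le_pos; [lra | apply pos_INR]).
    pose proof (Rle_abs lam). pose proof (Rabs_pos lam).
    destruct s as [|v s'].
    + unfold cost. simpl. lra.
    + assert (0 < K).
      { destruct HK as [Hf _]. pose proof (feas_one adj _ K v Hf).
        rewrite cnt_cons_eq in H1. lia. }
      set (s := v :: s') in *.
      unfold cost.
      eapply Rle_trans; [apply Hlam with (t := K); auto|lra].
      * apply NoDup_nodup.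
      * apply Forall_forall. intros x Hx. apply nodup_In in Hx.
        apply in_map_iff in Hx. destruct Hx as (i & <- & Hi).
        apply in_seq in Hi. apply algF_union with (adj := adj) (s := s) (K := K); auto. lia.
Qed.

Definition W : Type := (side * nat * nat)%type.
Definition W_dec (x y : W) : {x = y} + {x <> y}.
Proof. repeat decide equality. Defined.

Definition adjW (x y : W) : Prop :=
  match x, y with
  | (c, t, k), (c', t', k') => c <> c' /\ 0 < k <= t /\ 0 < k' <= t' /\ k + k' <= Nat.max t t'
  end.

Lemma adjW_sym : symmetric_rel adjW.
Proof.
  intros [[c t] k] [[c' t'] k'] (H1 & H2 & H3 & H4). simpl.
  repeat split; try lia. congruence.
Qed.

Lemma adjW_bip : bipartite adjW.
Proof.
  exists (fun x : W => match x with (SA, _, _) => true | _ => false end).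
  intros [[c t] k] [[c' t'] k'] (H1 & _). destruct c, c'; congruence.
Qed.

Fixpoint blk (tau m : nat) : list W :=
  match m with
  | 0 => []
  | S m' => blk tau m' ++ repeat (SA, tau, S m') (S m') ++ repeat (SB, tau, S m') (S m')
  end.

Fixpoint Sq (t : nat) : list W :=
  match t with
  | 0 => []
  | S t' => Sq t' ++ blk (S t') (S t')
  end.

Lemma cnt_rep (a b : W) n : count_occ W_dec (repeat a n) b = if W_dec a b then n else 0.
Proof.
  destruct (W_dec a b). subst; apply count_occ_repeat_eq; auto.
  apply count_occ_repeat_neq; auto.
Qed.

Lemma cnt_blk tau m c t k :
  (t = tau /\ 1 <= k <= m -> count_occ W_dec (blk tau m) (c, t, k) = k) /\
  (~ (t = tau /\ 1 <= k <= m) -> count_occ W_dec (blk tau m) (c, t, k) = 0).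
Proof.
  induction m as [|m IH]; cbn [blk].
  - split; intros; [lia|reflexivity].
  - rewrite !count_occ_app, !cnt_rep.
    destruct IH as [IH1 IH2].
    destruct (W_dec (SA, tau, S m) (c, t, k)) as [E1|E1];
    destruct (W_dec (SB, tau, S m) (c, t, k)) as [E2|E2];
    try (rewrite <- E1 in E2; discriminate).
    + injection E1 as <- <- <-. rewrite IH2 by lia. split; intros; lia.
    + injection E2 as <- <- <-. rewrite IH2 by lia. split; intros; lia.
    + assert (~ (t = tau /\ k = S m)).
      { intros [-> ->]. destruct c; auto. }
      split; intros.
      * rewrite IH1 by lia. lia.
      * rewrite IH2 by lia. lia.
Qed.

Lemma cnt_Sq t c tau k :
  (1 <= k <= tau /\ tau <= t -> count_occ W_dec (Sq t) (c, tau, k) = k) /\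
  (~ (1 <= k <= tau /\ tau <= t) -> count_occ W_dec (Sq t) (c, tau, k) = 0).
Proof.
  induction t as [|t IH]; cbn [Sq].
  - split; intros; [lia|reflexivity].
  - rewrite count_occ_app. destruct IH as [IH1 IH2].
    destruct (cnt_blk (S t) (S t) c tau k) as [B1 B2].
    split; intros.
    + destruct (Nat.eq_dec tau (S t)).
      * rewrite IH2 by lia. rewrite B1 by lia. lia.
      * rewrite IH1 by lia. rewrite B2 by lia. lia.
    + rewrite IH2 by lia. rewrite B2 by lia. lia.
Qed.

Lemma cnt_Sq_le t c tau k : count_occ W_dec (Sq t) (c, tau, k) <= t.
Proof.
  destruct (cnt_Sq t c tau k) as [H1 H2].
  destruct (classic (1 <= k <= tau /\ tau <= t)).
  - rewrite H1; lia.
  - rewrite H2; auto; lia.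
Qed.

Lemma Sq_prefix t t' : t <= t' -> exists r, Sq t' = Sq t ++ r.
Proof.
  induction 1 as [|t' H IH].
  - exists []. now rewrite app_nil_r.
  - destruct IH as [r Hr]. simpl. rewrite Hr. eexists. now rewrite <- app_assoc.
Qed.

Lemma indices {V} (d : forall x y : V, {x = y} + {x <> y}) (s : list V) v :
  exists l, NoDup l /\ length l = count_occ d s v /\ forall i, In i l -> nth_error s i = Some v.
Proof.
  induction s as [|a s IH]; simpl.
  - exists []. repeat split; auto. constructor. intros i [].
  - destruct IH as (l & Hn & Hl & Hi).
    assert (Hn' : NoDup (map S l)).
    { apply NoDup_map_on; auto. }
    assert (Hi' : forall i, In i (map S l) -> nth_error (a :: s) i = Some v).
    { intros i Hin. apply in_map_iff in Hin. destruct Hin as (j & <- & Hj). simpl; auto. }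
    destruct (d a v) as [E|E].
    + exists (0 :: map S l). repeat split.
      * constructor; auto. intros Hin. apply in_map_iff in Hin. destruct Hin as (j & ? & _); lia.
      * simpl. rewrite length_map. auto.
      * intros i [<-|Hin]; simpl. subst; auto. auto.
    + exists (map S l). repeat split; auto. rewrite length_map; auto.
Qed.

Definition LW (t : nat) (v : W) : list nat :=
  match v with
  | (SA, _, _) => seq 1 (count_occ W_dec (Sq t) v)
  | (SB, _, _) => seq (S t - count_occ W_dec (Sq t) v) (count_occ W_dec (Sq t) v)
  end.

Lemma feas_Sq t : 0 < t -> feasible adjW (Sq t) t.
Proof.
  intros Ht. exists (LW t). repeat split.
  - intros [[c tau] k]. destruct c; apply seq_NoDup.
  - intros [[c tau] k] n Hn. apply (occ_iff W_dec) in Hn. subst.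
    destruct c; apply length_seq.
  - intros [[c tau] k] x Hx. pose proof (cnt_Sq_le t c tau k).
    destruct c; cbv beta iota delta [LW] in Hx; apply in_seq in Hx; lia.
  - intros [[c tau] k] [[c' tau'] k'] x (Hc & H1 & H2 & H3) Hx Hy.
    destruct (cnt_Sq t c tau k) as [A1 A2]. destruct (cnt_Sq t c' tau' k') as [B1 B2].
    destruct c, c'; try congruence; cbv beta iota delta [LW] in Hx, Hy;
    (destruct (classic (1 <= k <= tau /\ tau <= t)) as [Ca|Ca];
    [rewrite A1 in Hx by auto | rewrite A2 in Hx by auto]);
    (destruct (classic (1 <= k' <= tau' /\ tau' <= t)) as [Cb|Cb];
    [rewrite B1 in Hy by auto | rewrite B2 in Hy by auto]);
    apply in_seq in Hx; apply in_seq in Hy; lia.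
  - exists (seq 1 t). repeat split.
    + apply seq_NoDup.
    + apply length_seq.
    + intros ([[c tau] k] & Hx). pose proof (cnt_Sq_le t c tau k).
      apply in_seq. destruct c; cbv beta iota delta [LW] in Hx; apply in_seq in Hx; lia.
    + intros Hx. exists (SA, t, t). simpl.
      destruct (cnt_Sq t SA t t) as [A1 _]. rewrite A1 by lia. auto.
Qed.

Lemma opt_exists {V} (adj : V -> V -> Prop) s t : feasible adj s t ->
  exists K, is_opt adj s K /\ K <= t.
Proof.
  intros Hf.
  destruct (dec_inh_nat_subset_has_unique_least_element (feasible adj s)) as (K & [HK1 HK2] & _).
  - intros n; apply classic.
  - eauto.
  - exists K. split; [split|]; auto.
Qed.

Section Dir1.
Variable alg : algorithm.
Hypothesis Hval : forall s, valid_run alg adjW s.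

Definition FW : fsys_family := fun c tau k x =>
  exists i, nth_error (Sq tau) i = Some (c, tau, k) /\ freq alg adjW (Sq tau) i = x.

Lemma FW_lift c tau k x t : tau <= t -> FW c tau k x ->
  exists i, nth_error (Sq t) i = Some (c, tau, k) /\ freq alg adjW (Sq t) i = x.
Proof.
  intros Hle (i & Hi & Hx). destruct (Sq_prefix tau t Hle) as [r Hr].
  assert (i < length (Sq tau)) by (apply nth_error_Some; congruence).
  exists i. rewrite Hr. rewrite nth_error_app1 by auto. rewrite freq_prefix by auto. auto.
Qed.

Lemma FW_fsys : is_fsystem FW.
Proof.
  split; [|split].
  - intros c t k x _ (i & Hi & <-). apply (proj1 (Hval (Sq t))).
    apply nth_error_Some; congruence.
  - intros c t k Hk. destruct (indices W_dec (Sq t) (c, t, k)) as (l & Hn & Hl & Hi).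
    exists (map (freq alg adjW (Sq t)) l). repeat split.
    + apply NoDup_map_on; auto. intros i j Hi' Hj' E.
      destruct (Nat.eq_dec i j); auto. exfalso.
      eapply (proj1 (proj2 (Hval (Sq t)))); eauto.
    + rewrite length_map, Hl. destruct (cnt_Sq t c t k) as [A _]. rewrite A; lia.
    + apply Forall_forall. intros x Hx. apply in_map_iff in Hx. destruct Hx as (i & <- & Hin).
      exists i; auto.
  - intros t k t' k' x Hk Hk' Hs HA HB.
    destruct (FW_lift _ _ _ _ (Nat.max t t') (Nat.le_max_l _ _) HA) as (i & Hi & Hx).
    destruct (FW_lift _ _ _ _ (Nat.max t t') (Nat.le_max_r _ _) HB) as (j & Hj & Hy).
    eapply (proj2 (proj2 (Hval (Sq (Nat.max t t'))))); [exact Hi | exact Hj | | congruence].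
    simpl. repeat split; try lia. discriminate.
Qed.

End Dir1.

Lemma dir1 (R : R) (HR : (1 <= R)%R) :
  (exists alg : algorithm, valid_on_bipartite alg /\ alg_competitive R alg) ->
  (exists F : fsys_family, is_fsystem F /\ fsys_competitive R F).
Proof.
  intros (alg & Hv & lam & Hc).
  assert (Hval : forall s, valid_run alg adjW s) by (intros; apply Hv; [apply adjW_sym|apply adjW_bip]).
  exists (FW alg). split. apply FW_fsys; auto.
  exists lam. intros t Ht l Hnd Hl.
  destruct (opt_exists adjW (Sq t) t (feas_Sq t Ht)) as (K & HK & HKt).
  pose proof (Hc W adjW adjW_sym adjW_bip (Sq t) K HK) as Hcost.
  assert (Hle : length l <= cost alg adjW (Sq t)).
  { unfold cost. apply NoDup_incl_length; auto. intros x Hx.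
    rewrite Forall_forall in Hl. destruct (Hl x Hx) as (c & tau & k & Hk & Ht' & HF).
    destruct (FW_lift alg c tau k x t Ht' HF) as (i & Hi & Hx').
    apply nodup_In. apply in_map_iff. exists i. split; auto.
    apply in_seq. assert (i < length (Sq t)) by (apply nth_error_Some; congruence). lia. }
  apply le_INR in Hle. apply le_INR in HKt.
  assert (R * INR K <= R * INR t)%R by (apply Rmult_le_compat_l; lra).
  lra.
Qed.

Local Close Scope nat_scope.
Open Scope R_scope.

Theorem lemma1 (R : R) (HR : 1 <= R) :
  (exists alg : algorithm, valid_on_bipartite alg /\ alg_competitive R alg) <->
  (exists F : fsys_family, is_fsystem F /\ fsys_competitive R F).
Proof. split; [apply dir1 | apply dir2]; auto. Qed.
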